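(* Let $w_c, w_r \in \mathbb{N}$ with $w_c \le w_r$, and let $G$ be a finite simple $(w_c,w_r)$-regular bipartite graph with parts $\mathcal{V}_c$ and $\mathcal{V}_r$, where $n = |\mathcal{V}_c|$ and $m = |\mathcal{V}_r|$ (so $m \le n$, i.e. $\mathcal{V}_r$ is the smaller part). If $G$ has girth $8$, then $$ m \;\ge\; \frac{-w_c(w_c-2) + w_c\sqrt{(w_c-2)^2 + 4(w_c-1)n}}{2}. $$
   Context: A $(w_c,w_r)$-regular bipartite graph is a bipartite graph with parts $\mathcal{V}_c$ (''variable nodes'') and $\mathcal{V}_r$ (''check nodes'') such that every vertex of $\mathcal{V}_c$ has degree $w_c$ and every vertex of $\mathcal{V}_r$ has degree $w_r$; in particular $w_c n = w_r m$. The girth of a graph is the length of its shortest cycle. *)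

(* Defs.v *)
From mathcomp Require Import all_boot all_order all_algebra.
Set Implicit Arguments. Unset Strict Implicit. Unset Printing Implicit Defensive.

(* A bipartite graph with parts Vc (variable nodes) and Vr (check nodes) is
   given by its adjacency e : Vc -> Vr -> bool (simple: at most one edge
   between a pair; edges only across parts). *)
Definition bip_adj (Vc Vr : finType) (e : Vc -> Vr -> bool) : rel (Vc + Vr) :=
  fun x y => match x, y with
             | inl a, inr b => e a b
             | inr b, inl a => e a b
             | _, _ => false
             end.

Definition biregular (Vc Vr : finType) (e : Vc -> Vr -> bool) (wc wr : nat) :=
  (forall v : Vc, #|[set r : Vr | e v r]| = wc) /\
  (forall r : Vr, #|[set v : Vc | e v r]| = wr).

Definition is_cycle (T : finType) (g : rel T) (s : seq T) : bool :=
  (3 <= size s) && uniq s && cycle g s.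

Definition girth_eq (T : finType) (g : rel T) (k : nat) : Prop :=
  (exists s, is_cycle g s /\ size s = k) /\
  (forall s, is_cycle g s -> k <= size s).

(* Main.v *)
Require Import Defs.
From mathcomp Require Import all_boot all_order all_algebra.
Set Implicit Arguments. Unset Strict Implicit.

Section S.
Variables (Vc Vr : finType) (e : Vc -> Vr -> bool).

Lemma eq_ll (a b : Vc) : (inl a == inl b :> Vc + Vr) = (a == b).
Proof. by apply/eqP/eqP => [[]|->]. Qed.
Lemma eq_rr (a b : Vr) : (inr a == inr b :> Vc + Vr) = (a == b).
Proof. by apply/eqP/eqP => [[]|->]. Qed.
Lemma eq_lr (a : Vc) (b : Vr) : (inl a == inr b :> Vc + Vr) = false.
Proof. by apply/eqP. Qed.
Lemma eq_rl (a : Vc) (b : Vr) : (inr b == inl a :> Vc + Vr) = false.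
Proof. by apply/eqP. Qed.

Lemma cyc4 v v' c r :
  v != v' -> c != r -> e v c -> e v' c -> e v' r -> e v r ->
  is_cycle (bip_adj e) [:: inl v; inr c; inl v'; inr r].
Proof.
move=> h1 h2 h3 h4 h5 h6.
by rewrite /is_cycle /= !inE /= h3 h4 h5 h6 ?eq_ll ?eq_rr ?eq_lr ?eq_rl /= orbF h1 h2.
Qed.

Lemma cyc6 v1 v2 v3 c1 c2 c3 :
  v1 != v2 -> v1 != v3 -> v2 != v3 -> c1 != c2 -> c1 != c3 -> c2 != c3 ->
  e v1 c1 -> e v2 c1 -> e v2 c2 -> e v3 c2 -> e v3 c3 -> e v1 c3 ->
  is_cycle (bip_adj e) [:: inl v1; inr c1; inl v2; inr c2; inl v3; inr c3].
Proof.
move=> h1 h2 h3 h4 h5 h6 k1 k2 k3 k4 k5 k6.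
rewrite /is_cycle /= !inE /= ?eq_ll ?eq_rr ?eq_lr ?eq_rl /= !orbF.
by rewrite !negb_or h1 h2 h3 h4 h5 h6 k1 k2 k3 k4 k5 k6.
Qed.

Lemma card_sum (T : finType) (p : pred T) : #|[set x | p x]| = \sum_x (p x : nat).
Proof.
rewrite -sum1_card big_mkcond /=; apply: eq_bigr => x _; by rewrite inE.
Qed.

Lemma dcount wc wr : biregular e wc wr -> wc * #|Vc| = wr * #|Vr|.
Proof.
case=> hc hr.
have -> : wc * #|Vc| = \sum_(v : Vc) \sum_(r : Vr) (e v r : nat).
  rewrite mulnC -sum_nat_const.
  apply: eq_bigr => v _; by rewrite -(hc v) card_sum.
rewrite exchange_big /= mulnC -sum_nat_const.
by apply: eq_bigr => r _; rewrite -(hr r) card_sum.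
Qed.

Lemma card_minus1 (T : finType) (p : pred T) (x : T) k :
  #|[set y | p y]| = k -> p x -> \sum_y ((y != x) && p y : nat) = k - 1.
Proof.
move=> hk px; rewrite -card_sum.
have -> : [set y | (y != x) && p y] = [set y | p y] :\ x by apply/setP => y; rewrite !inE.
have := cardsD1 x [set y | p y]; rewrite hk inE px => ->.
by rewrite add1n subSS subn0.
Qed.

Lemma bound wc wr (v0 : Vc) : biregular e wc wr ->
  (forall s, is_cycle (bip_adj e) s -> 8 <= size s) ->
  wc + wc * ((wr - 1) * (wc - 1)) <= #|Vr|.
Proof.
move=> [hc hr] nocyc.
have n4 v v' c r : v != v' -> c != r -> e v c -> e v' c -> e v' r -> e v r -> False.
  by move=> *; have := nocyc _ (cyc4 (c:=c) (r:=r) (v:=v) (v':=v') ltac:(eassumption) ltac:(eassumption) ltac:(eassumption) ltac:(eassumption) ltac:(eassumption) ltac:(eassumption)).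
have n6 v1 v2 v3 c1 c2 c3 :
  v1 != v2 -> v1 != v3 -> v2 != v3 -> c1 != c2 -> c1 != c3 -> c2 != c3 ->
  e v1 c1 -> e v2 c1 -> e v2 c2 -> e v3 c2 -> e v3 c3 -> e v1 c3 -> False.
  by move=> a1 a2 a3 a4 a5 a6 b1 b2 b3 b4 b5 b6; have := nocyc _ (cyc6 a1 a2 a3 a4 a5 a6 b1 b2 b3 b4 b5 b6).
pose f c v r := [&& e v0 c, v != v0, e v c, r != c & e v r].
pose C1 := [set r | e v0 r].
pose P := [set x : (Vr * Vc) * Vr | f x.1.1 x.1.2 x.2].
pose I := [set x.2 | x in P].
have injP : {in P &, injective snd}.
  move=> [[c v] r] [[c' v'] r']; rewrite !inE /f /=.
  move=> /and5P[a1 a2 a3 a4 a5] /and5P[b1 b2 b3 b4 b5] Er; subst r'.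
  case: (eqVneq c c') => [Ec|Nc].
    subst c'; case: (eqVneq v v') => [->//|Nv]; exfalso.
    by apply: (n4 v v' c r Nv _ a3 b3 b5 a5); rewrite eq_sym.
  case: (eqVneq v v') => [Ev|Nv]; exfalso.
    subst v'; apply: (n4 v0 v c c') => //; by rewrite eq_sym.
  apply: (n6 v0 v v' c r c') => //; by rewrite eq_sym.
have disj : C1 :&: I = set0.
  apply/setP => r; rewrite !inE; apply/negbTE/negP => /andP[h /imsetP[[[c v] r'] hP Er]].
  subst r; move: hP; rewrite inE /f /= => /and5P[a1 a2 a3 a4 a5].
  by apply: (n4 v0 v c r') => //; rewrite eq_sym.
have cP : #|P| = wc * ((wr - 1) * (wc - 1)).
  rewrite /P card_sum.
  have -> : \sum_(x : (Vr * Vc) * Vr) (f x.1.1 x.1.2 x.2 : nat) =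
     \sum_(cv : Vr * Vc) \sum_r (f cv.1 cv.2 r : nat).
    by rewrite [RHS]pair_bigA.
  have -> : \sum_(cv : Vr * Vc) \sum_r (f cv.1 cv.2 r : nat) =
     \sum_c \sum_v \sum_r (f c v r : nat).
    by rewrite [RHS]pair_bigA; apply: eq_bigr => [[c v]].
  have step c v : \sum_r (f c v r : nat) = (e v0 c : nat) * (((v != v0) && e v c : nat) * (wc - 1)).
    rewrite /f; case: (e v0 c) => /=; last by rewrite big1.
    case: (v != v0) => /=; last by rewrite big1.
    case hvc: (e v c) => /=; last by rewrite big1 // => r _; rewrite andbF.
    by rewrite (card_minus1 (hc v) hvc) !mul1n.
  have -> : \sum_c \sum_v \sum_r (f c v r : nat) =
     \sum_c (e v0 c : nat) * ((\sum_v ((v != v0) && e v c : nat)) * (wc - 1)).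
    apply: eq_bigr => c _; rewrite big_distrl big_distrr /=; apply: eq_bigr => v _; exact: step.
  have -> : \sum_c (e v0 c : nat) * ((\sum_v ((v != v0) && e v c : nat)) * (wc - 1)) =
     \sum_c (e v0 c : nat) * ((wr - 1) * (wc - 1)).
    apply: eq_bigr => c _; case h: (e v0 c); last by rewrite !mul0n.
    by rewrite (card_minus1 (hr c) h).
  by rewrite -big_distrl /= -card_sum hc.
have := cardsUI C1 I; rewrite disj cards0 addn0 card_in_imset // cP /C1 hc => <-.
exact: max_card.
Qed.
End S.

From mathcomp Require Import zify ring lra.
Import Order.TTheory GRing.Theory Num.Theory.
Local Open Scope ring_scope.

Lemma real_part (R : rcfType) (w Wr M N : R) :
  1 <= w -> 1 <= M -> 0 <= N -> w * N = Wr * M ->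
  (w - 1) * Wr * w + 2 * w <= M + w * w ->
  (- (w * (w - 2)) + w * Num.sqrt ((w - 2) ^+ 2 + 4 * (w - 1) * N)) / 2 <= M.
Proof.
move=> w1 M1 N0 hd hb.
set D := _ + _ * N.
have h1 : 0 <= (w - 1) * N by apply: mulr_ge0 => //; lra.
have D0 : 0 <= D by rewrite /D; have := sqr_ge0 (w - 2); nra.
have S0 := sqrtr_ge0 D.
have S2 := sqr_sqrtr D0.
set S := Num.sqrt D in S0 S2 *.
have key : (w - 1) * w ^+ 2 * N <= M ^+ 2 + M * w * (w - 2).
  have -> : (w - 1) * w ^+ 2 * N = (w - 1) * w * (Wr * M) by rewrite -hd; ring.
  have hM : 0 <= M by lra.
  have := ler_wpM2l hM (hb : (w - 1) * Wr * w + 2 * w <= M + w * w).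
  move=> hh; rewrite expr2; nra.
have sq : (w * S) ^+ 2 <= (2 * M + w * (w - 2)) ^+ 2.
  rewrite exprMn S2 /D.
  have w20 : 0 <= w ^+ 2 by apply: sqr_ge0.
  nra.
have B0 : 0 <= 2 * M + w * (w - 2) by have := sqr_ge0 (w - 1); nra.
have wS0 : 0 <= w * S by apply: mulr_ge0 => //; lra.
have : w * S <= 2 * M + w * (w - 2).
  rewrite -(ler_pXn2r (n:=2)) //; by rewrite nnegrE.
lra.
Qed.

Theorem theorem1 (R : rcfType) (wc wr : nat) (Vc Vr : finType)
  (e : Vc -> Vr -> bool) :
  (wc <= wr)%N ->
  biregular e wc wr ->
  girth_eq (bip_adj e) 8 ->
  (- (wc%:R * (wc%:R - 2)) +
     wc%:R * Num.sqrt ((wc%:R - 2) ^+ 2 + 4 * (wc%:R - 1) * (#|Vc|)%:R)) / 2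
  <= (#|Vr|)%:R :> R.
Proof.
move=> hw hbi [[s [hs hsz]] hmin].
have [v0 _] : exists v0 : Vc, True.
  move: hs; case: s hsz => [|a [|b t]] //= _ /andP[_].
  rewrite /= => /andP[hab _].
  by case: a b hab => [a|a] [b|b] //= _; first [exists a | exists b].
have hb := bound v0 hbi hmin.
have hd := dcount hbi.
case: (posnP wc) => [->|wc0].
  by rewrite !mul0r oppr0 add0r mul0r ler0n.
apply: (real_part (Wr := wr%:R)); rewrite ?ler1n ?ler0n //.
- lia.
- by rewrite -!natrM hd.
- have hnat : ((wc - 1) * wr * wc + 2 * wc <= #|Vr| + wc * wc)%N by nia.
  have := hnat; rewrite -(ler_nat R) !natrD !natrM natrB //; move=> h; lra.
Qed.
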